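(* Let $K$ be a fan-like sphere with vertex set $[m]$ and $\Sigma$ a complete fan over $K$ with $m$ 1-cones. Choose a nonzero point $x_i$ on each 1-cone corresponding to $i\in[m]$ and let $\widehat X=(\widehat x_1,\dots,\widehat x_m)$ be a Shephard diagram for $\Sigma$ with respect to $X=(x_1,\dots,x_m)$. Then for any $i\in[m]$, the subsequence $\widehat X\setminus(\widehat x_i)$ is a Shephard diagram for $\operatorname{proj}_i\Sigma$ (with respect to the images in $\mathbb{R}^n/\operatorname{span}\{x_i\}$ of the points $x_j$, $j\ne i$).
   Context: A fan-like sphere is a simplicial $(n-1)$-sphere underlying a complete simplicial fan in $\mathbb{R}^n$. For a vertex $i$, $\operatorname{proj}_i\Sigma$ is the fan in $\mathbb{R}^n/\operatorname{span}\{x_i\}$ formed by the images of the cones of $\Sigma$ containing $x_i$; its underlying complex is $\operatorname{link}_K\{i\}$ (images of $x_j$ with $j$ not in the link may be present as extra points). Linear transform: for a sequence $X=(x_1,\dots,x_m)$ spanning $\mathbb{R}^n$, write a basis of $\{\alpha\in\mathbb{R}^m:\sum\alpha_jx_j=0\}$ as rows of an $(m-n)\times m$ matrix; its columns $\overline x_j$ form a linear transform. If $X$ positively spans $\mathbb{R}^n$, $\operatorname{pos}\overline X$ is strongly convex; choose a hyperplane $H$ not through $0$ meeting each ray $\{a\overline x_j:a>0\}$ at $\widehat x_j$; $(\widehat x_1,\dots,\widehat x_m)$ is a Shephard diagram of $X$ (a Shephard diagram for $\Sigma$ when the $x_j$ lie on the 1-cones of $\Sigma$). *)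

(* Defs.v *)
From HB Require Import structures.
From mathcomp Require Import all_boot all_order all_algebra.
From mathcomp Require Import reals.
Set Implicit Arguments. Unset Strict Implicit. Unset Printing Implicit Defensive.
Import Order.TTheory GRing.Theory Num.Theory.
Local Open Scope ring_scope.

(* A sequence X = (x_1,...,x_m) of vectors of R^n is encoded as the matrix
   X : 'M_(m, n) whose j-th row is x_j. *)

Section Defs.
Variable R : realType.

Definition pos_cone (m n : nat) (X : 'M[R]_(m, n)) (S : {set 'I_m})
    (v : 'rV[R]_n) : Prop :=
  exists c : 'rV[R]_m,
    (forall j, 0 <= c 0 j) /\ (forall j, j \notin S -> c 0 j = 0) /\ v = c *m X.

Definition positively_spans (m n : nat) (X : 'M[R]_(m, n)) : Prop :=
  forall v : 'rV[R]_n, pos_cone X setT v.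

Definition simplicial_complex_on (m : nat) (K : {set {set 'I_m}}) : Prop :=
  (forall s t : {set 'I_m}, s \in K -> t \subset s -> t \in K) /\
  (forall j : 'I_m, [set j] \in K).

Definition complete_simplicial_fan_over (m n : nat) (K : {set {set 'I_m}})
    (X : 'M[R]_(m, n)) : Prop :=
  (forall s, s \in K -> forall c : 'rV[R]_m,
      (forall j, j \notin s -> c 0 j = 0) -> c *m X = 0 -> c = 0) /\
  (* fan: cones intersect in common faces *)
  (forall s t, s \in K -> t \in K -> forall v,
      (pos_cone X s v /\ pos_cone X t v) <-> pos_cone X (s :&: t) v) /\
  (forall v : 'rV[R]_n, exists2 s, s \in K & pos_cone X s v).

(* B : 'M_(k, m) is a linear transform of X: X spans R^n and the rows of B form
   a basis of the space {alpha in R^m | sum_j alpha_j x_j = 0}. The columns of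
   B are xbar_1, ..., xbar_m. *)
Definition linear_transform (m n k : nat) (X : 'M[R]_(m, n)) (B : 'M[R]_(k, m))
    : Prop :=
  row_full X /\ row_free B /\ (B == kermx X)%MS.

(* Xhat : 'M_(k, m) (columns xhat_j) is a Shephard diagram of X: X positively
   spans, and for some linear transform B of X and some affine hyperplane
   H = {y | h y = 1} (not through 0), xhat_j is the intersection of H with the
   ray {a xbar_j | a > 0}. *)
Definition shephard_diagram (m n k : nat) (X : 'M[R]_(m, n)) (Xhat : 'M[R]_(k, m))
    : Prop :=
  positively_spans X /\
  exists B : 'M[R]_(k, m), linear_transform X B /\
  exists h : 'rV[R]_k, forall j : 'I_m,
    (h *m col j Xhat) 0 0 = 1 /\ exists2 a : R, 0 < a & col j Xhat = a *: col j B.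

End Defs.

(* Main.v *)
Require Import Defs.
From HB Require Import structures.
From mathcomp Require Import all_boot all_order all_algebra.
From mathcomp Require Import reals.
Import Order.TTheory GRing.Theory Num.Theory.
Local Open Scope ring_scope.

Set Implicit Arguments.
Section Helpers.
Variable F : fieldType.

Lemma row'_mulmx m n p (i : 'I_m) (A : 'M[F]_(m, n)) (B : 'M[F]_(n, p)) :
  row' i (A *m B) = row' i A *m B.
Proof. by apply/matrixP => r c; rewrite !mxE; apply: eq_bigr => j _; rewrite !mxE. Qed.

Lemma col'_mulmx m n p (i : 'I_m) (A : 'M[F]_(p, n)) (B : 'M[F]_(n, m)) :
  col' i (A *m B) = A *m col' i B.
Proof. by apply/matrixP => r c; rewrite !mxE; apply: eq_bigr => j _; rewrite !mxE. Qed.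

Lemma mul_split m n p (i : 'I_m) (A : 'M[F]_(p, m)) (X : 'M[F]_(m, n)) :
  A *m X = col i A *m row i X + col' i A *m row' i X.
Proof.
apply/matrixP => r c; rewrite !mxE (bigD1_ord i (P:=xpredT)) // big_ord1 !mxE.
by congr (_ + _); apply: eq_bigr => j _; rewrite !mxE.
Qed.

Lemma col_row1 m n (i : 'I_m) (a : 'rV[F]_m) (X : 'M[F]_(m, n)) :
  col i a *m row i X = a 0 i *: row i X.
Proof. by apply/rowP => c; rewrite !mxE big_ord1 !mxE. Qed.

Lemma col'_col m p (i : 'I_m) j (A : 'M[F]_(p, m)) :
  col j (col' i A) = col (lift i j) A.
Proof. by apply/colP => r; rewrite !mxE. Qed.

Definition ext m (i : 'I_m) (w : 'rV[F]_(m.-1)) (t : F) : 'rV[F]_m :=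
  \row_j oapp (fun j' => w 0 j') t (unlift i j).

Lemma ext_i m (i : 'I_m) w t : ext i w t 0 i = t.
Proof. by rewrite mxE unlift_none. Qed.

Lemma col'_ext m (i : 'I_m) w t : col' i (ext i w t) = w.
Proof. by apply/rowP => j; rewrite !mxE liftK. Qed.

End Helpers.
Arguments mul_split {F m n p}.
Arguments col_row1 {F m n}.
Arguments col'_col {F m p}.
Arguments row'_mulmx {F m n p}.
Arguments col'_mulmx {F m n p}.
Arguments ext {F m}.
Arguments ext_i {F m}.
Arguments col'_ext {F m}.

Theorem proposition5p10 (R : realType) (m n k : nat)
    (K : {set {set 'I_m}}) (X : 'M[R]_(m, n)) (Xhat : 'M[R]_(k, m)) :
  simplicial_complex_on K ->
  complete_simplicial_fan_over K X ->
  (forall j : 'I_m, row j X != 0) ->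
  shephard_diagram X Xhat ->
  forall (i : 'I_m) (d : nat) (P : 'M[R]_(n, d)),
    row_full P -> (kermx P == row i X)%MS ->
    shephard_diagram (row' i (X *m P)) (col' i Xhat).
Proof.
move=> _ _ Xnz [Hpos [B [[Hfull [Hfree HB]] [h Hh]]]] i d P HP Hk.
case/andP: HB => HBk HkB.
case/andP: Hk => HkP HPk.
have XiP : row i X *m P = 0 by apply/sub_kermxP.
have BX : B *m X = 0 by apply/sub_kermxP.
have Ypos : positively_spans (row' i (X *m P)).
  move=> w; case/row_fullP: HP => Q HQ.
  case: (Hpos (w *m Q)) => c [c0 [_ cX]].
  exists (col' i c); split; first by move=> j; rewrite mxE.
  split; first by move=> j; rewrite in_setT.
  rewrite row'_mulmx mulmxA.
  have -> : col' i c *m row' i X = c *m X - col i c *m row i X.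
    by rewrite (mul_split i) addrC addKr.
  by rewrite mulmxBl -(mulmxA (col i c)) XiP mulmx0 subr0 -cX -mulmxA HQ mulmx1.
split => //.
exists (col' i B); split.
  split.
    rewrite -sub1mx; apply/row_subP => r.
    case: (Ypos (row r 1%:M)) => c [_ [_ ->]].
    by apply/submxP; exists c.
  split.
    apply: inj_row_free => u Hu.
    have a0 : col' i (u *m B) = 0 by rewrite col'_mulmx.
    have aX : (u *m B) *m X = 0 by rewrite -mulmxA BX mulmx0.
    have ai : (u *m B) 0 i = 0.
      move: aX; rewrite (mul_split i) a0 mul0mx addr0 col_row1 => /eqP.
      by rewrite scaler_eq0 (negbTE (Xnz i)) orbF => /eqP.
    have a00 : u *m B = 0.
      apply/rowP => j; case: (unliftP i j) => [j'|] ->; last by rewrite ai mxE.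
      have := congr1 (fun M : 'rV_(m.-1) => M 0 j') a0.
      by rewrite /= [in X in X = _ -> _]mxE => ->; rewrite !mxE.
    by apply: (row_free_inj Hfree); rewrite a00 mul0mx.
  apply/andP; split.
    apply/sub_kermxP.
    rewrite row'_mulmx mulmxA.
    have -> : col' i B *m row' i X = B *m X - col i B *m row i X.
      by rewrite (mul_split i) addrC addKr.
    by rewrite BX sub0r mulNmx -mulmxA XiP mulmx0 oppr0.
  apply/row_subP => r.
  set w := row r _.
  have wY : w *m row' i (X *m P) = 0.
    apply/sub_kermxP; exact: submx_trans (row_sub _ _) (submx_refl _).
  rewrite row'_mulmx mulmxA in wY.
  have : (w *m row' i X <= row i X)%MS.
    by apply: submx_trans HkP; apply/sub_kermxP.
  case/submxP => D HD.
  set a := ext i w (- D 0 0).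
  have aX : a *m X = 0.
    have DX : D *m row i X = D 0 0 *: row i X.
      by rewrite -mul_scalar_mx -mx11_scalar.
    by rewrite (mul_split i) col_row1 ext_i col'_ext HD DX scaleNr addNr.
  have aB : (a <= B)%MS.
  apply: submx_trans HkB.
 apply/sub_kermxP. exact aX.
 case/submxP: aB => E HE.
  apply/submxP; exists E.
 rewrite -col'_mulmx -HE.
by rewrite /a col'_ext.
exists h => j.
have [Hh1 [a0 a00 Ha]] := Hh (lift i j).
rewrite !col'_col.
split; first exact: Hh1.
by exists a0.
Qed.
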